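(* Let $q$ be a prime power and $b,k,t$ positive integers with $k>t$. Then \[ r_b^{wt_b}(k,t)\ge\frac{5q^b(t-b+2)(t-b+1)}{3(q^b-1)(t-b+3)}. \]
   Context: For $\boldsymbol{z}=(z_0,\ldots,z_{n-1}),\boldsymbol{w}\in\mathbb{F}_q^n$, $d_b(\boldsymbol{z},\boldsymbol{w})$ is the number of $i\in\{0,\ldots,n-1\}$ with $(z_i,\ldots,z_{i+b-1})\ne(w_i,\ldots,w_{i+b-1})$ (indices mod $n$), and $wt_b(\boldsymbol{x})=d_b(\boldsymbol{x},\boldsymbol{0})$ is the $b$-symbol weight function on $\mathbb{F}_q^k$. A systematic encoding $\mathrm{Enc}(\boldsymbol{x})=(\boldsymbol{x},p(\boldsymbol{x}))\in\mathbb{F}_q^{k+r}$ is a function-correcting $b$-symbol code for $f$ if $d_b(\mathrm{Enc}(\boldsymbol{x}_1),\mathrm{Enc}(\boldsymbol{x}_2))\ge 2t+1$ whenever $f(\boldsymbol{x}_1)\ne f(\boldsymbol{x}_2)$; $r_b^f(k,t)$ is the smallest $r$ for which one exists. *)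

(* Defs.v *)
From mathcomp Require Import all_boot all_order all_algebra all_field.
Set Implicit Arguments. Unset Strict Implicit. Unset Printing Implicit Defensive.
Import GRing.Theory Num.Theory.
Local Open Scope ring_scope.

(* Entry of a length-n vector at index m taken modulo n (n > 0 whenever the
   vector has an index; for n = 0 there are no positions anyway). *)
Definition cyc (F : finFieldType) (n : nat) (z : 'rV[F]_n) (m : nat) : F :=
  match @insub nat (fun i => i < n)%N 'I_n (m %% n)%N with
  | Some i => z 0 i
  | None => 0
  end.

Definition dist_b (F : finFieldType) (n b : nat) (z w : 'rV[F]_n) : nat :=
  #|[set i : 'I_n | [exists j : 'I_b, cyc z (i + j)%N != cyc w (i + j)%N]]|.

Definition wt_b (F : finFieldType) (k b : nat) (x : 'rV[F]_k) : nat :=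
  dist_b b x 0.

Definition enc (F : finFieldType) (k r : nat) (p : 'rV[F]_k -> 'rV[F]_r)
  (x : 'rV[F]_k) : 'rV[F]_(k + r) := row_mx x (p x).

Definition is_FCbSC (F : finFieldType) (k r b t : nat) (T : eqType)
  (f : 'rV[F]_k -> T) (p : 'rV[F]_k -> 'rV[F]_r) : Prop :=
  forall x1 x2 : 'rV[F]_k, f x1 != f x2 ->
    (2 * t + 1 <= dist_b b (enc p x1) (enc p x2))%N.

(* r is an admissible redundancy; r_b^f(k,t) is the least such r. *)
Definition fc_redundancy_ok (F : finFieldType) (k r b t : nat) (T : eqType)
  (f : 'rV[F]_k -> T) : Prop :=
  exists p : 'rV[F]_k -> 'rV[F]_r, is_FCbSC b t f p.

(* Main.v *)
Require Import Defs.
From mathcomp Require Import all_boot all_order all_algebra all_field.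
From mathcomp Require Import zify.
Import GRing.Theory Num.Theory.
Local Open Scope ring_scope.

Lemma cycE (F : finFieldType) n (z : 'rV[F]_n) m (Hn : (0 < n)%N) :
  cyc z m = z 0 (Ordinal (ltn_pmod m Hn)).
Proof.
rewrite /cyc (insubT (fun i => i < n)%N (ltn_pmod m Hn)) /=.
by congr (z 0 _); apply: val_inj.
Qed.

Lemma card_interval n (P : {pred 'I_n}) lo hi :
  (forall u : 'I_n, u \in P -> lo <= u < hi)%N -> (#|P| <= hi - lo)%N.
Proof.
move=> H. rewrite cardE -(size_map val).
rewrite -(size_iota lo (hi - lo)). apply: uniq_leq_size.
  rewrite map_inj_uniq ?enum_uniq //; exact: val_inj.
move=> m /mapP [u]; rewrite mem_enum => /H /andP[h1 h2] ->.
rewrite mem_iota h1 /=. lia.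
Qed.

Lemma sum_bool (T : finType) (P : pred T) :
  (\sum_(j : T) (P j : nat) = #|P|)%N.
Proof.
rewrite -sum1_card [RHS]big_mkcond /=; apply: eq_bigr => j _ /=.
by rewrite unfold_in; case: (P j).
Qed.

Lemma sum_dist M :
  (3 * \sum_(i < M) \sum_(j < M) ((i - j) + (j - i)) + M = M ^ 3)%N.
Proof.
have T : forall M, (2 * \sum_(i < M) (M - i) = M * (M + 1))%N.
  elim=> [|m IH]; first by rewrite big_ord0.
  rewrite big_ord_recr /=.
  have -> : (\sum_(i < m) (m.+1 - widen_ord (leqnSn m) i) =
            \sum_(i < m) (m - i) + m)%N.
    rewrite (eq_bigr (fun i : 'I_m => (m - i) + 1)%N); last first.
      move=> i _ /=; have := ltn_ord i; lia.
    by rewrite big_split /= big_const_ord iter_addn_0 mul1n.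
  lia.
elim: M => [|m IH]; first by rewrite big_ord0.
rewrite big_ord_recr /=.
have -> : (\sum_(i < m) \sum_(j < m.+1) ((widen_ord (leqnSn m) i - j) + (j - widen_ord (leqnSn m) i))
          = \sum_(i < m) \sum_(j < m) ((i - j) + (j - i)) + \sum_(i < m) (m - i))%N.
  rewrite -big_split /=; apply: eq_big => // i _.
  rewrite big_ord_recr /=. have := ltn_ord i. move=> hi.
  congr (_ + _)%N; lia.
have -> : (\sum_(j < m.+1) ((m - j) + (j - m)) = \sum_(i < m) (m - i))%N.
  rewrite big_ord_recr /= subnn !addn0; apply: eq_bigr => j _ /=.
  have := ltn_ord j; lia.
have := T m. lia.
Qed.

Lemma sum_constY (Y : finType) (k : nat) : (\sum_(z : Y) k = #|Y| * k)%N.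
Proof. by rewrite sum_nat_const. Qed.

Lemma cs_nat (Y : finType) (c : Y -> nat) :
  ((\sum_y c y) * (\sum_y c y) <= #|Y| * \sum_y c y * c y)%N.
Proof.
have E1 : ((\sum_y c y) * (\sum_y c y) = \sum_y \sum_z c y * c z)%N.
  rewrite big_distrl /=; apply: eq_bigr => y _; by rewrite big_distrr.
have E2 : (\sum_y \sum_z (c y * c y + c z * c z) = 2 * (#|Y| * \sum_y c y * c y))%N.
  rewrite (eq_bigr (fun y => #|Y| * (c y * c y) + \sum_z c z * c z)%N); last first.
    by move=> y _; rewrite big_split /= sum_constY.
  rewrite big_split /= sum_constY -big_distrr /=. lia.
have L : (2 * \sum_y \sum_z c y * c z <= \sum_y \sum_z (c y * c y + c z * c z))%N.
  rewrite big_distrr /=; apply: leq_sum => y _.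
  rewrite big_distrr /=; apply: leq_sum => z _.
  move: (c y) (c z) => u v.
  case: (leqP u v) => h.
    have [d ->] : exists d, v = (u + d)%N by exists (v - u)%N; lia.
    nia.
  have [d ->] : exists d, u = (v + d)%N by exists (u - v)%N; lia.
  nia.
rewrite E1. nia.
Qed.

Lemma pairs_eq (Y : finType) M (g : 'I_M -> Y) :
  (M * M <= #|Y| * \sum_(i < M) \sum_(j < M) (g i == g j))%N.
Proof.
pose c y := (\sum_(i < M | g i == y) 1)%N.
have hM : M = (\sum_y c y)%N.
  rewrite -{1}(card_ord M) -sum1_card (partition_big g predT) //=.
have hE : (\sum_(i < M) \sum_(j < M) (g i == g j) = \sum_y c y * c y)%N.
  rewrite (eq_bigr (fun i => c (g i))); last first.
    move=> i _; rewrite /c [RHS]big_mkcond /=; apply: eq_bigr => j _.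
    by rewrite eq_sym; case: (g j == g i).
  rewrite (partition_big g predT) //=; apply: eq_bigr => y _.
  rewrite (eq_bigr (fun i => 1 * c y)%N); last by move=> i /eqP ->; rewrite mul1n.
  by rewrite -big_distrl.
rewrite hE {1 2}hM. exact: cs_nat.
Qed.

Lemma pairs_neq (Y : finType) M (g : 'I_M -> Y) :
  (#|Y| * \sum_(i < M) \sum_(j < M) (g i != g j) <= M * M * (#|Y| - 1))%N.
Proof.
have H := pairs_eq _ _ g.
have S : (\sum_(i < M) \sum_(j < M) (g i != g j) + \sum_(i < M) \sum_(j < M) (g i == g j) = M * M)%N.
  rewrite -big_split /= (_ : (M * M = \sum_(i < M) M)%N); last by rewrite big_const_ord iter_addn_0.
  apply: eq_bigr => i _; rewrite -big_split /=.
  rewrite [RHS](_ : M = \sum_(j < M) 1)%N; last by rewrite big_const_ord iter_addn_0 mul1n.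
  apply: eq_bigr => j _.
  by case: (g i == g j).
nia.
Qed.

Set Implicit Arguments. Unset Strict Implicit. Unset Printing Implicit Defensive.

Definition pre (F : finFieldType) k (j : nat) : 'rV[F]_k :=
  \row_(i < k) (if (i < j)%N then 1 else 0).

Definition wv (F : finFieldType) k r b (p : 'rV[F]_k -> 'rV[F]_r)
  (x : 'rV[F]_k) (u : nat) : {ffun 'I_b -> F} :=
  [ffun jj : 'I_b => cyc (enc p x) (u + jj)].

Section Code.
Variables (F : finFieldType) (k r b : nat) (p : 'rV[F]_k -> 'rV[F]_r).

Lemma wv_neq x y u :
  (wv b p x u != wv b p y u) =
  [exists jj : 'I_b, cyc (enc p x) (u + jj) != cyc (enc p y) (u + jj)].
Proof.
rewrite -negb_forall; congr negb; apply/eqP/forallP => [H jj|H].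
  by apply/eqP; have := congr1 (fun f : {ffun 'I_b -> F} => f jj) H; rewrite /= !ffunE.
by apply/ffunP => jj; rewrite !ffunE; apply/eqP.
Qed.

Lemma dist_wv x y :
  dist_b b (enc p x) (enc p y) = #|[set u : 'I_(k + r) | wv b p x u != wv b p y u]|.
Proof. by rewrite /dist_b; apply: eq_card => u; rewrite !inE wv_neq. Qed.

Lemma enc_left x m (Hm : (m < k)%N) : cyc (enc p x) m = x 0 (Ordinal Hm).
Proof.
have Hn : (0 < k + r)%N by lia.
rewrite cycE /enc.
have -> : Ordinal (ltn_pmod m Hn) = lshift r (Ordinal Hm).
  by apply: val_inj; rewrite /= modn_small //; lia.
by rewrite row_mxEl.
Qed.

Lemma enc_pre j m : (m < k)%N -> cyc (enc p (pre F k j)) m = if (m < j)%N then 1 else 0.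
Proof. by move=> Hm; rewrite (enc_left _ Hm) mxE. Qed.

Lemma dA_bound i j : (b <= k)%N ->
  (#|[set u : 'I_(k + r) | ((u <= k - b)%N && (wv b p (pre F k i) u != wv b p (pre F k j) u))]|
   <= maxn i j - (minn i j - (b - 1)))%N.
Proof.
move=> hb; apply: card_interval => u; rewrite inE => /andP[hu].
rewrite wv_neq => /existsP[jj].
have hjj := ltn_ord jj.
rewrite !enc_pre; try lia.
case: ifP; case: ifP => h1 h2; rewrite ?eqxx //; lia.
Qed.

Lemma dB_bound (P : pred 'I_(k + r)) : (b <= k)%N ->
  (#|[set u : 'I_(k + r) | ((k - b < u)%N && P u)]| <= r + b - 1)%N.
Proof.
move=> hb.
apply: (leq_trans (@card_interval _ _ (k - b).+1 (k + r) _)); last by lia.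
move=> u; rewrite inE => /andP[h _]; have := ltn_ord u; lia.
Qed.

Lemma dist_split x y :
  (dist_b b (enc p x) (enc p y) <=
   #|[set u : 'I_(k + r) | ((u <= k - b)%N && (wv b p x u != wv b p y u))]| +
   #|[set u : 'I_(k + r) | ((k - b < u)%N && (wv b p x u != wv b p y u))]|)%N.
Proof.
rewrite dist_wv; apply: leq_trans (leq_card_setU _ _).
apply: subset_leq_card; apply/subsetP => u; rewrite !inE => H.
by rewrite H !andbT; case: leqP.
Qed.

Lemma wt_pre j : (0 < k)%N ->
  wt_b b (pre F k j) = #|[set u : 'I_k | [exists jj : 'I_b, ((u + jj) %% k < j)%N]]|.
Proof.
move=> hk; rewrite /wt_b /dist_b; apply: eq_card => u; rewrite !inE.
apply: eq_existsb => jj; rewrite !(cycE _ _ _ _ hk) !mxE /=.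
by case: ifP; rewrite ?oner_eq0 ?eqxx.
Qed.

Lemma wt_pre_lt j : (0 < b)%N -> (j + b <= k)%N ->
  (wt_b b (pre F k j) < wt_b b (pre F k j.+1))%N.
Proof.
move=> hb hjk; have hk : (0 < k)%N by lia.
rewrite !wt_pre //; apply: proper_card; apply/properP; split.
  apply/subsetP => u; rewrite !inE => /existsP[jj h]; apply/existsP; exists jj; lia.
have hj : (j < k)%N by lia.
exists (Ordinal hj); rewrite !inE.
  apply/existsP; exists (Ordinal hb); rewrite /= addn0 modn_small //.
apply/negP => /existsP[jj]; rewrite /= modn_small; first lia.
have := ltn_ord jj; lia.
Qed.

Lemma wt_pre_mono i j : (0 < b)%N -> (i < j)%N -> (j + b <= k.+1)%N ->
  (wt_b b (pre F k i) < wt_b b (pre F k j))%N.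
Proof.
move=> hb; elim: j => // j IH hij hjk.
have hjb : (j + b <= k)%N by lia.
have := wt_pre_lt hb hjb.
case: (ltngtP i j) => h.
- move=> h2; apply: ltn_trans h2; apply: IH => //; lia.
- lia.
- by rewrite h.
Qed.

End Code.

Lemma card_as_sum n (P Q : pred 'I_n) :
  #|[set u : 'I_n | P u && Q u]| = (\sum_(u | P u) (Q u : nat))%N.
Proof.
rewrite -sum1dep_card big_mkcondr; apply: eq_bigr => u _; by case: (Q u).
Qed.

Lemma arith (a b1 Q1 c r D E : nat) :
  (Q1.+1 + c = a + 3)%N ->
  (3 * D + (a + 3) = (a + 3) ^ 3)%N ->
  (Q1.+1 * E <= (r + b1) * ((a + 3) * (a + 3) * Q1))%N ->
  ((a + 3) * ((a + 2) * (2 * (a + b1) + 3)) <= D + (a + 3) * ((a + 2) * b1) + E)%N ->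
  (5 * Q1.+1 * (a + 1) * (a + 2) <= 3 * r * Q1 * (a + 3))%N.
Proof.
move=> ec h3 h2 h1.
have H1 := leq_mul (leqnn (3 * Q1.+1)) h1.
have H3 : (3 * Q1.+1 * D + Q1.+1 * (a + 3) = Q1.+1 * (a + 3) ^ 3)%N by rewrite -h3; lia.
have e2 : ((Q1.+1 + c) * ((a + 3) * b1) = (a + 3) * ((a + 3) * b1))%N by rewrite ec.
have key : ((a + 3) * (5 * Q1.+1 * (a + 1) * (a + 2)) <= (a + 3) * (3 * r * Q1 * (a + 3)))%N.
  lia.
by rewrite leq_pmul2l in key; lia.
Qed.

Lemma main_nat (F : finFieldType) (b k t r : nat) :
  (0 < b)%N -> (b <= t)%N -> (t < k)%N ->
  fc_redundancy_ok r b t (@wt_b F k b) ->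
  (5 * #|F| ^ b * (t - b + 1) * (t - b + 2) <= 3 * r * (#|F| ^ b - 1) * (t - b + 3))%N.
Proof.
move=> hb hbt htk [p Hp].
set Q := (#|F| ^ b)%N.
have hQ : #|{ffun 'I_b -> F}| = Q by rewrite card_ffun card_ord.
have q2 : (1 < #|F|)%N := card_finNzRing_gt1 F.
have Q2 : (2 <= Q)%N.
  rewrite /Q; have := leq_pexp2l (ltnW q2) hb; rewrite expn1 => h; lia.
have pair : forall i j : nat, i != j -> (i <= t - b + 2)%N -> (j <= t - b + 2)%N ->
    (2 * t + 1 <= (maxn i j - (minn i j - (b - 1))) +
       #|[set u : 'I_(k + r) | ((k - b < u)%N && (wv b p (pre F k i) u != wv b p (pre F k j) u))]|)%N.
  move=> i j hij hi hj.
  have hd : (2 * t + 1 <= dist_b b (enc p (pre F k i)) (enc p (pre F k j)))%N.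
    apply: Hp.
    case: (ltngtP i j) => h.
    - by rewrite neq_ltn (@wt_pre_mono F k b i j hb h) //; lia.
    - by rewrite neq_ltn (@wt_pre_mono F k b j i hb h) ?orbT //; lia.
    - by move: hij; rewrite h eqxx.
  apply: (leq_trans hd); apply: (leq_trans (dist_split b p _ _)).
  rewrite leq_add2r; apply: dA_bound; lia.
have dBb : forall P : pred 'I_(k + r),
    (#|[set u : 'I_(k + r) | ((k - b < u)%N && P u)]| <= r + b - 1)%N.
  move=> P; apply: dB_bound; lia.
case: (leqP Q (t - b + 3)) => hQa; last first.
  have := pair 0%N 1%N isT (leq0n _) ltac:(lia).
  have := dBb (fun u => wv b p (pre F k 0) u != wv b p (pre F k 1) u).
  move=> /= h1 h2; have h3 := leq_trans h2 (leq_add (leqnn _) h1).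
  have hr : (2 * (t - b + 1) <= r)%N.
    move: h3; rewrite /maxn /minn /=; lia.
  have hQa' : ((t - b + 1) + 3 <= Q)%N by lia.
  rewrite (_ : (t - b + 2 = (t - b + 1) + 1)%N); last by lia.
  rewrite (_ : (t - b + 3 = (t - b + 1) + 2)%N); last by lia.
  clearbody Q; clear -hr hQa'.
  move: (t - b + 1)%N hr hQa' => a hr hQa.
  have [c ->] : exists c, Q = (a + 3 + c)%N by exists (Q - (a + 3))%N; lia.
  have [d ->] : exists d, r = (2 * a + d)%N by exists (r - 2 * a)%N; lia.
  rewrite (_ : (a + 3 + c - 1 = a + 2 + c)%N); last by lia.
  nia.
(* Plotkin case *)
set M := (t - b + 3)%N.
pose dB (i j : 'I_M) := (\sum_(u : 'I_(k + r) | (k - b < u)%N)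
   (wv b p (pre F k i) u != wv b p (pre F k j) u : nat))%N.
have pp : forall i j : 'I_M,
    ((i != j) * (2 * t + 1) <= ((i - j) + (j - i)) + (i != j) * (b - 1) + dB i j)%N.
  move=> i j; case: (eqVneq i j) => [->|hij] /=; first by rewrite mul0n.
  have hij' : (i : nat) != j by apply: contra_neq hij; apply: val_inj.
  have hi := ltn_ord i; have hj := ltn_ord j.
  have := pair i j hij' ltac:(lia) ltac:(lia).
  rewrite card_as_sum -/(dB i j) !mul1n.
  move: (dB i j) => X; move: (i : nat) (j : nat) hij' => i0 j0 _; lia.
have Hsum : (\sum_(i < M) \sum_(j < M) (i != j) * (2 * t + 1) <=
   \sum_(i < M) \sum_(j < M) ((i - j) + (j - i)) +
   \sum_(i < M) \sum_(j < M) (i != j) * (b - 1) +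
   \sum_(i < M) \sum_(j < M) dB i j)%N.
  rewrite -!big_split /=; apply: leq_sum => i _; rewrite -!big_split /=.
  apply: leq_sum => j _; exact: pp.
have cnt : forall c, (\sum_(i < M) \sum_(j < M) (i != j) * c = M * (M.-1 * c))%N.
  move=> c; rewrite (eq_bigr (fun _ => M.-1 * c)%N).
    by rewrite big_const_ord iter_addn_0 mulnC.
  move=> i _; rewrite -big_distrl /= sum_bool; congr (_ * _)%N.
  rewrite (_ : M.-1 = #|predC1 i|); last by rewrite cardC1 card_ord.
  by apply: eq_card => j; rewrite !inE eq_sym.
have DBb : (Q * \sum_(i < M) \sum_(j < M) dB i j <= (r + b - 1) * (M * M * (Q - 1)))%N.
  have -> : (\sum_(i < M) \sum_(j < M) dB i j = \sum_(u : 'I_(k + r) | (k - b < u)%N)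
      \sum_(i < M) \sum_(j < M) (wv b p (pre F k i) u != wv b p (pre F k j) u : nat))%N.
    rewrite /dB; under eq_bigr => i _ do rewrite exchange_big /=.
    by rewrite exchange_big.
  rewrite big_distrr /=.
  apply: (@leq_trans (\sum_(u : 'I_(k + r) | (k - b < u)%N) (M * M * (Q - 1)))%N).
    apply: leq_sum => u _; rewrite -hQ.
    exact: (pairs_neq _ _ (fun i : 'I_M => wv b p (pre F k i) u)).
  rewrite (eq_bigr (fun _ => 1 * (M * M * (Q - 1)))%N); last by move=> u _; rewrite mul1n.
  rewrite -big_distrl /= sum1dep_card leq_mul2r; apply/orP; right.
  apply: (leq_trans (@card_interval _ _ (k - b).+1 (k + r) _)); last by lia.
  move=> u; rewrite inE => h; have := ltn_ord u; lia.
have SD := sum_dist M.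
rewrite !cnt in Hsum.
move: Hsum DBb SD.
move: (\sum_(i < M) \sum_(j < M) ((i - j) + (j - i)))%N (\sum_(i < M) \sum_(j < M) dB i j)%N => D E h1 h2 h3.
have eM : M = (t - b + 3)%N by [].
clearbody Q M; clear -h1 h2 h3 eM hQa Q2 hb hbt.
have [b1 eb] : exists b1, b = b1.+1 by exists b.-1; lia.
have [a ea] : exists a, t = (a + b)%N by exists (t - b)%N; lia.
have [Q1 eQ] : exists Q1, Q = Q1.+1 by exists Q.-1; lia.
have [c ec] : exists c, (Q + c = t - b + 3)%N by exists (t - b + 3 - Q)%N; lia.
subst.
rewrite !addnK in hQa h3 h2 h1 ec *.
rewrite (_ : (a + 3).-1 = a + 2)%N in h1; last by lia.
rewrite (_ : (b1.+1 - 1 = b1)%N) in h1; last by lia.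
rewrite (_ : (2 * (a + b1.+1) + 1 = 2 * (a + b1) + 3)%N) in h1; last by lia.
rewrite (_ : (Q1.+1 - 1 = Q1)%N) in h2 *; last by lia.
rewrite (_ : (r + b1.+1 - 1 = r + b1)%N) in h2; last by lia.
exact: (arith ec h3 h2 h1).
Qed.

Import Order.TTheory.

Theorem mainTheorem17 (F : finFieldType) (b k t : nat) :
  (0 < b)%N -> (0 < t)%N -> (t < k)%N ->
  forall r : nat, fc_redundancy_ok r b t (@wt_b F k b) ->
  ((5 * (#|F| ^ b)%:Z * (t%:Z - b%:Z + 2) * (t%:Z - b%:Z + 1))%:~R
     / ((3 * ((#|F| ^ b)%:Z - 1) * (t%:Z - b%:Z + 3))%:~R) : rat)
  <= (r%:R : rat).
Proof.
move=> hb ht htk r Hr.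
set Q := (#|F| ^ b)%N.
have q2 : (1 < #|F|)%N := card_finNzRing_gt1 F.
have Q2 : (2 <= Q)%N.
  rewrite /Q; have := leq_pexp2l (ltnW q2) hb; rewrite expn1 => h; lia.
set N := (5 * Q%:Z * (t%:Z - b%:Z + 2) * (t%:Z - b%:Z + 1)).
set Dn := (3 * (Q%:Z - 1) * (t%:Z - b%:Z + 3)).
have hN : 0 <= N.
  rewrite /N; move: (t%:Z - b%:Z) => s.
  have : 0 <= (s + 2) * (s + 1) by case: (lerP 0 (s + 1)) => h; nia.
  nia.
case: (lerP Dn 0) => hD.
  apply: (@le_trans _ _ 0); last by rewrite ler0n.
  apply: mulr_ge0_le0; first by rewrite ler0z.
  by rewrite invr_le0 lerz0.

rewrite ler_pdivrMr ?ltr0z //.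
rewrite -[r%:R]/((r%:Z)%:~R) -intrM ler_int.
case: (leqP b t) => hbt.
  have := main_nat hb hbt htk Hr; rewrite -/Q /N /Dn => h.
  rewrite (subzn hbt) (_ : Q%:Z - 1 = (Q - 1)%N%:Z); last by rewrite -(subzn (ltnW Q2)).
  rewrite -!PoszD -!PoszM lez_nat.
  move: h; move: (t - b)%N (Q - 1)%N => x y h; lia.
rewrite /N /Dn in hD *.
have hQ1 : 0 < 3 * (Q%:Z - 1) by rewrite (_ : Q%:Z - 1 = (Q - 1)%N%:Z) ?(subzn (ltnW Q2)) // -PoszM ltz_nat; lia.
rewrite pmulr_rgt0 // in hD.
have hs : t%:Z - b%:Z < 0 by rewrite subr_lt0 ltz_nat.
move: hD hs hQ1; move: (t%:Z - b%:Z) (Q%:Z - 1) => x y hD hs hQ1.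
have [->|->] : x = -1 \/ x = -2 by lia.
  by rewrite addrC subrr mulr0 mulr_ge0 // mulr_ge0 //; lia.
by rewrite (_ : -2 + 2 = 0 :> int) // mulr0 mul0r mulr_ge0 // mulr_ge0 //; lia.
Qed.
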